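(* Let $f$ be a periodic traveling wave of speed $c$ with $c\neq0$ and $c^2\neq 1$. If $\lambda\in\mathbb{R}\setminus\{0\}$ belongs to $\sigma(\mathrm{P})$, then one of the Floquet multipliers $\rho$ of (P) at $\lambda$ satisfies $\rho^2=1$.
   Context: A traveling wave of speed $c$ is a real solution $f$ of $(c^2-1)f''+\sin f=0$, with energy $E$ given by $\tfrac12(c^2-1)(f')^2+1-\cos f=E$; periodic traveling waves are librational ($0<E<2$) or rotational ($E<0$ if $c^2<1$, $E>2$ if $c^2>1$), with fundamental period $T$ (smallest $T>0$ with $f(z+T)=f(z)\pmod{2\pi}$). Let $\gamma=1/(c^2-1)$. Equation (P): $p''-2c\gamma\lambda p'+\gamma(\lambda^2+\cos f(z))p=0$, written as a first-order system for $(p,p')$; its monodromy matrix is $F(T;\lambda)$ where $F$ is the fundamental matrix with $F(0;\lambda)=I$, and its Floquet multipliers are the eigenvalues of the monodromy matrix. $\sigma(\mathrm{P})$ is the set of $\lambda\in\mathbb{C}$ for which (P) has a nontrivial solution bounded on $\mathbb{R}$. *)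

(* Defs.v *)
From Stdlib Require Import Reals ZArith.
From Coquelicot Require Import Coquelicot.
Open Scope R_scope.

Definition gam (c : R) : R := / (c ^ 2 - 1).

Definition traveling_wave (c : R) (f : R -> R) : Prop :=
  exists f1 f2 : R -> R,
    forall z, is_derive f z (f1 z) /\ is_derive f1 z (f2 z) /\
              (c ^ 2 - 1) * f2 z + sin (f z) = 0.

Definition period_mod_2pi (f : R -> R) (T : R) : Prop :=
  forall z, exists k : Z, f (z + T) = f z + 2 * PI * IZR k.

Definition fundamental_period (f : R -> R) (T : R) : Prop :=
  0 < T /\ period_mod_2pi f T /\
  forall T', 0 < T' < T -> ~ period_mod_2pi f T'.

(* periodic traveling wave of speed c with fundamental period T
   (covers both librational and rotational waves) *)
Definition periodic_traveling_wave (c : R) (f : R -> R) (T : R) : Prop :=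
  traveling_wave c f /\ fundamental_period f T.

Definition P_rhs (c : R) (f : R -> R) (lam : C) (z : R) (p p1 : C) : C :=
  Cminus (Cmult (RtoC (2 * c * gam c)) (Cmult lam p1))
         (Cmult (RtoC (gam c)) (Cmult (Cplus (Cmult lam lam) (RtoC (cos (f z)))) p)).

Definition solves_P (c : R) (f : R -> R) (lam : C) (p : R -> C) : Prop :=
  exists p1 p2 : R -> C,
    forall z, is_derive p z (p1 z) /\ is_derive p1 z (p2 z) /\
              p2 z = P_rhs c f lam z (p z) (p1 z).

Definition in_sigmaP (c : R) (f : R -> R) (lam : C) : Prop :=
  exists p : R -> C, solves_P c f lam p /\
    (exists z, p z <> RtoC 0) /\
    (exists M : R, forall z, Cmod (p z) <= M).

(* F = [[F11, F12], [F21, F22]] is the fundamental matrix of the first-order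
   system for (p, p'), i.e. F' = A(z) F with A = [[0, 1], [-gamma(lam^2+cos f), 2 c gamma lam]],
   and F(0) = I. *)
Definition fundamental_matrix (c : R) (f : R -> R) (lam : C)
    (F11 F12 F21 F22 : R -> C) : Prop :=
  (forall z,
      is_derive F11 z (F21 z) /\ is_derive F21 z (P_rhs c f lam z (F11 z) (F21 z)) /\
      is_derive F12 z (F22 z) /\ is_derive F22 z (P_rhs c f lam z (F12 z) (F22 z))) /\
  F11 0 = RtoC 1 /\ F12 0 = RtoC 0 /\ F21 0 = RtoC 0 /\ F22 0 = RtoC 1.

Definition is_eigenvalue2 (a b d e rho : C) : Prop :=
  Cminus (Cmult (Cminus a rho) (Cminus e rho)) (Cmult b d) = RtoC 0.

(* Main.v *)
Require Import Defs.
From Stdlib Require Import Reals ZArith Lra Psatz.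
From Coquelicot Require Import Coquelicot.
Open Scope R_scope.

Lemma dchg (f : R -> R) (x d dd : R) : is_derive f x d -> @eq R d dd -> is_derive f x dd.
Proof. intros H ->; exact H. Qed.
Lemma dmul (f g : R -> R) x df dg : is_derive f x df -> is_derive g x dg ->
  is_derive (fun x => f x * g x) x (df * g x + f x * dg).
Proof. intros. apply (is_derive_mult f g x df dg); auto. intros; apply Rmult_comm. Qed.
Lemma dplus (f g : R -> R) x df dg : is_derive f x df -> is_derive g x dg ->
  is_derive (fun x => f x + g x) x (df + dg).
Proof. intros. apply (is_derive_plus f g x df dg); auto. Qed.
Lemma dminus (f g : R -> R) x df dg : is_derive f x df -> is_derive g x dg ->
  is_derive (fun x => f x - g x) x (df - dg).
Proof. intros. apply (is_derive_minus f g x df dg); auto. Qed.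
Lemma dopp (f : R -> R) x df : is_derive f x df -> is_derive (fun x => - f x) x (- df).
Proof. intros. apply (is_derive_opp f x df); auto. Qed.
Lemma dconst (a x : R) : is_derive (fun _ => a) x 0.
Proof. apply (is_derive_const a x). Qed.
Lemma dscal (f : R -> R) x k df : is_derive f x df -> is_derive (fun x => k * f x) x (k * df).
Proof. apply is_derive_scal. Qed.
Lemma dshift (f : R -> R) x s df : is_derive f (x + s) df -> is_derive (fun x => f (x + s)) x df.
Proof. intros H.
  apply dchg with (scal 1 df).
  - apply (is_derive_comp f (fun x => x + s) x df 1 H).
    apply dchg with (1 + 0). { apply dplus. apply (is_derive_id x). apply dconst. } apply Rplus_0_r.
  - apply (scal_one df).
Qed.
Lemma dexp (k x : R) : is_derive (fun x => exp (k * x)) x (k * exp (k * x)).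
Proof.
  apply dchg with (scal k (exp (k*x))).
  - apply (is_derive_comp exp (fun x => k * x) x (exp (k*x)) k (is_derive_exp _)).
    apply dchg with (k * 1). { apply dscal. apply (is_derive_id x). } apply Rmult_1_r.
  - reflexivity.
Qed.

Lemma mle0 a b : a <= 0 -> 0 <= b -> a * b <= 0.
Proof. intros. assert (0 <= (-a)*b) by (apply Rmult_le_pos; lra). lra. Qed.
Lemma mle0' a b : 0 <= a -> b <= 0 -> a * b <= 0.
Proof. intros. rewrite Rmult_comm. apply mle0; auto. Qed.

Lemma mono_decr (phi dphi : R -> R) a b : a <= b -> (forall z, is_derive phi z (dphi z)) ->
  (forall z, dphi z <= 0) -> phi b <= phi a.
Proof.
  intros hab hd hs.
  destruct (MVT_gen phi a b dphi) as [c0 [_ hc]].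
  - intros; apply hd.
  - intros. apply continuity_pt_filterlim. apply (ex_derive_continuous phi x).
    eexists; apply hd.
  - assert (dphi c0 * (b - a) <= 0). { assert (0 <= b - a) by lra. specialize (hs c0). clear H; apply mle0; lra. }
    lra.
Qed.

Lemma energy0 (E e : R -> R) K z0 : (forall z, is_derive E z (e z)) -> (forall z, 0 <= E z) ->
  (forall z, Rabs (e z) <= K * E z) -> E z0 = 0 -> forall z, E z = 0.
Proof.
  intros hd hp hb h0 z.
  destruct (Rle_dec z0 z) as [hz|hz].
  - assert (H := mono_decr (fun x => E x * exp (- K * x))
        (fun x => e x * exp (-K * x) + E x * (- K * exp (- K * x))) z0 z hz).
    assert (Hle : E z * exp (- K * z) <= E z0 * exp (- K * z0)).
    { apply H.
      - intro x. cbv beta. apply (dmul E (fun x => exp (-K*x))). apply hd. apply (dexp (-K) x).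
      - intro x. specialize (hb x). pose proof (exp_pos (-K*x)).
        assert (e x <= K * E x) by (apply Rle_trans with (Rabs (e x)); [apply Rle_abs|exact hb]).
        cbv beta. replace (e x * exp (- K * x) + E x * (- K * exp (- K * x))) with ((e x - K * E x) * exp (- K * x)) by ring.
        clear H; apply mle0; lra. }
    clear H; rewrite h0, Rmult_0_l in Hle. pose proof (exp_pos (-K*z)) as He. pose proof (hp z) as Hp.
    destruct Hp as [Hp|Hp]; [|auto]. exfalso. pose proof (Rmult_lt_0_compat _ _ Hp He). lra.
  - assert (hz' : z <= z0) by lra.
    assert (H := mono_decr (fun x => - (E x * exp (K * x)))
        (fun x => - (e x * exp (K * x) + E x * (K * exp (K * x)))) z z0 hz').
    assert (Hle : - (E z0 * exp (K * z0)) <= - (E z * exp (K * z))).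
    { apply H.
      - intro x. cbv beta. apply (dopp (fun x => E x * exp (K * x))). apply (dmul E (fun x => exp (K*x))). apply hd. apply (dexp K x).
      - intro x. specialize (hb x). pose proof (exp_pos (K*x)).
        assert (- e x <= K * E x) by (apply Rle_trans with (Rabs (e x)); [rewrite <- Rabs_Ropp; apply Rle_abs|exact hb]).
        cbv beta. replace (- (e x * exp (K * x) + E x * (K * exp (K * x)))) with ((- e x - K * E x) * exp (K * x)) by ring.
        clear H; apply mle0; lra. }
    clear H; rewrite h0, Rmult_0_l in Hle. pose proof (exp_pos (K*z)) as He. pose proof (hp z) as Hp.
    destruct Hp as [Hp|Hp]; [|auto]. exfalso. pose proof (Rmult_lt_0_compat _ _ Hp He). lra.
Qed.

Lemma abs2uv u v : Rabs (2*u*v) <= u*u + v*v.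
Proof. pose proof (Rle_0_sqr (u - v)). pose proof (Rle_0_sqr (u+v)). unfold Rsqr in *. unfold Rabs. destruct (Rcase_abs (2*u*v)); lra. Qed.

Lemma energy_bound (a b B y y1 : R) : Rabs b <= B ->
  Rabs (2*y*y1 + 2*y1*(a*y1 - b*y)) <= (1 + B + 2*Rabs a) * (y*y + y1*y1).
Proof.
  intros hB.
  replace (2*y*y1 + 2*y1*(a*y1 - b*y)) with (2*y*y1 + ((2*a)*(y1*y1) + (-b)*(2*y*y1))) by ring.
  eapply Rle_trans. apply Rabs_triang.
  eapply Rle_trans. apply Rplus_le_compat_l. apply Rabs_triang.
  rewrite (Rabs_mult (2*a)), (Rabs_mult (-b)), Rabs_Ropp, (Rabs_mult 2 a).
  pose proof (abs2uv y y1).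
  assert (h1 : Rabs (y1*y1) = y1*y1) by (apply Rabs_pos_eq; nra).
  rewrite h1.
  assert (Rabs 2 = 2) by (apply Rabs_pos_eq; lra).
  rewrite H0.
  pose proof (Rabs_pos a). pose proof (Rabs_pos b). pose proof (Rabs_pos (2*y*y1)).
  assert (Rabs b * Rabs (2*y*y1) <= B * (y*y+y1*y1)).
  { apply Rmult_le_compat; auto. }
  assert (2 * Rabs a * (y1*y1) <= 2 * Rabs a * (y*y + y1*y1)).
  { apply Rmult_le_compat_l. lra. nra. }
  nra.
Qed.

Definition al (c lam : R) := 2 * c * gam c * lam.
Definition be (c : R) (f : R -> R) (lam z : R) := gam c * (lam * lam + cos (f z)).
Definition rsol c f lam (y y1 : R -> R) := forall z,
  is_derive y z (y1 z) /\ is_derive y1 z (al c lam * y1 z - be c f lam z * y z).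

Lemma be_bound c f lam z : Rabs (be c f lam z) <= Rabs (gam c) * (lam * lam + 1).
Proof.
  unfold be. rewrite Rabs_mult. apply Rmult_le_compat_l. apply Rabs_pos.
  pose proof (COS_bound (f z)). pose proof (Rle_0_sqr lam). unfold Rsqr in *.
  unfold Rabs; destruct (Rcase_abs _); lra.
Qed.

Lemma uniq c f lam y y1 z0 : rsol c f lam y y1 -> y z0 = 0 -> y1 z0 = 0 ->
  forall z, y z = 0 /\ y1 z = 0.
Proof.
  intros hs h0 h1 z.
  assert (HE := energy0 (fun z => y z * y z + y1 z * y1 z)
     (fun z => 2 * y z * y1 z + 2 * y1 z * (al c lam * y1 z - be c f lam z * y z))
     (1 + Rabs (gam c) * (lam * lam + 1) + 2 * Rabs (al c lam)) z0).
  assert (E0 : y z * y z + y1 z * y1 z = 0).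
  { apply HE.
    - intro x. destruct (hs x) as [d1 d2].
      apply dchg with ((y1 x * y x + y x * y1 x) + ((al c lam * y1 x - be c f lam x * y x) * y1 x + y1 x * (al c lam * y1 x - be c f lam x * y x))).
      + apply (dplus (fun x => y x * y x) (fun x => y1 x * y1 x)).
        * apply (dmul y y); auto.
        * apply (dmul y1 y1); auto.
      + ring.
    - intro x. pose proof (Rle_0_sqr (y x)). pose proof (Rle_0_sqr (y1 x)). unfold Rsqr in *. lra.
    - intro x. apply energy_bound. apply be_bound.
    - rewrite h0, h1. ring. }
  pose proof (Rle_0_sqr (y z)). pose proof (Rle_0_sqr (y1 z)). unfold Rsqr in *.
  split; apply Rsqr_0_uniq; unfold Rsqr; lra.
Qed.

Lemma der_fst (f : R -> C) z l : is_derive f z l -> is_derive (fun x => fst (f x)) z (fst l).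
Proof.
  intros H. unfold is_derive in *.
  apply (filterdiff_comp f (fun t : C => fst t) (fun y => scal y l) (fun t : C => fst t)) in H.
  - simpl in H. exact H.
  - apply filterdiff_linear. apply (is_linear_fst (K:=R_AbsRing) (U:=R_NormedModule) (V:=R_NormedModule)).
Qed.
Lemma der_snd (f : R -> C) z l : is_derive f z l -> is_derive (fun x => snd (f x)) z (snd l).
Proof.
  intros H. unfold is_derive in *.
  apply (filterdiff_comp f (fun t : C => snd t) (fun y => scal y l) (fun t : C => snd t)) in H.
  - simpl in H. exact H.
  - apply filterdiff_linear. apply (is_linear_snd (K:=R_AbsRing) (U:=R_NormedModule) (V:=R_NormedModule)).
Qed.

Lemma P_rhs_fst c f lam z p p1 :
  fst (P_rhs c f (RtoC lam) z p p1) = al c lam * fst p1 - be c f lam z * fst p.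
Proof. destruct p, p1. unfold P_rhs, al, be, Cminus, Cmult, Cplus, Copp, RtoC; simpl. ring. Qed.
Lemma P_rhs_snd c f lam z p p1 :
  snd (P_rhs c f (RtoC lam) z p p1) = al c lam * snd p1 - be c f lam z * snd p.
Proof. destruct p, p1. unfold P_rhs, al, be, Cminus, Cmult, Cplus, Copp, RtoC; simpl. ring. Qed.

Lemma csol_fst c f lam (p p1 : R -> C) :
  (forall z, is_derive p z (p1 z) /\ is_derive p1 z (P_rhs c f (RtoC lam) z (p z) (p1 z))) ->
  rsol c f lam (fun z => fst (p z)) (fun z => fst (p1 z)).
Proof.
  intros H z. destruct (H z) as [h1 h2]. split.
  - apply (der_fst p). exact h1.
  - rewrite <- P_rhs_fst. apply (der_fst p1). exact h2.
Qed.
Lemma csol_snd c f lam (p p1 : R -> C) :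
  (forall z, is_derive p z (p1 z) /\ is_derive p1 z (P_rhs c f (RtoC lam) z (p z) (p1 z))) ->
  rsol c f lam (fun z => snd (p z)) (fun z => snd (p1 z)).
Proof.
  intros H z. destruct (H z) as [h1 h2]. split.
  - apply (der_snd p). exact h1.
  - rewrite <- P_rhs_snd. apply (der_snd p1). exact h2.
Qed.

Lemma cos_2pik x k : cos (x + 2 * PI * IZR k) = cos x.
Proof.
  assert (hs : sin (PI * IZR k) = 0) by (apply sin_eq_0_1; exists k; ring).
  rewrite cos_plus.
  replace (2 * PI * IZR k) with (2 * (PI * IZR k)) by ring.
  rewrite cos_2a_sin, hs.
  assert (hs2 : sin (2 * (PI * IZR k)) = 0).
  { apply sin_eq_0_1. exists (2 * k)%Z. rewrite mult_IZR. simpl. ring. }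
  rewrite hs2. ring.
Qed.

Lemma be_per c f lam T : period_mod_2pi f T -> forall z, be c f lam (z + T) = be c f lam z.
Proof.
  intros hp z. destruct (hp z) as [k hk]. unfold be. rewrite hk, cos_2pik. reflexivity.
Qed.

Lemma rsol_lin c f lam y y1 w w1 a b : rsol c f lam y y1 -> rsol c f lam w w1 ->
  rsol c f lam (fun z => a * y z + b * w z) (fun z => a * y1 z + b * w1 z).
Proof.
  intros hy hw z. destruct (hy z) as [y0 y2]. destruct (hw z) as [w0 w2]. split.
  - apply (dplus (fun z => a * y z) (fun z => b * w z)); apply dscal; auto.
  - apply dchg with (a * (al c lam * y1 z - be c f lam z * y z) + b * (al c lam * w1 z - be c f lam z * w z)).
    + apply (dplus (fun z => a * y1 z) (fun z => b * w1 z)); apply dscal; auto.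
    + ring.
Qed.

Lemma rsol_shift c f lam y y1 s : (forall z, be c f lam (z + s) = be c f lam z) ->
  rsol c f lam y y1 -> rsol c f lam (fun z => y (z + s)) (fun z => y1 (z + s)).
Proof.
  intros hb hy z. destruct (hy (z + s)) as [d1 d2]. split.
  - apply (dshift y). exact d1.
  - apply (dshift y1). rewrite hb in d2. exact d2.
Qed.

Definition rfund c f lam (X11 X12 X21 X22 : R -> R) :=
  rsol c f lam X11 X21 /\ rsol c f lam X12 X22 /\ X11 0 = 1 /\ X12 0 = 0 /\ X21 0 = 0 /\ X22 0 = 1.

Lemma repr c f lam X11 X12 X21 X22 y y1 : rfund c f lam X11 X12 X21 X22 -> rsol c f lam y y1 ->
  forall z, y z = y 0 * X11 z + y1 0 * X12 z /\ y1 z = y 0 * X21 z + y1 0 * X22 z.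
Proof.
  intros [h1 [h2 [e11 [e12 [e21 e22]]]]] hy z.
  set (a := y 0). set (b := y1 0).
  assert (hq := rsol_lin c f lam X11 X21 X12 X22 a b h1 h2).
  assert (hd := rsol_lin c f lam y y1 _ _ 1 (-1) hy hq).
  assert (z1 : 1 * y 0 + -1 * (a * X11 0 + b * X12 0) = 0) by (rewrite e11, e12; unfold a; ring).
  assert (z2 : 1 * y1 0 + -1 * (a * X21 0 + b * X22 0) = 0) by (rewrite e21, e22; unfold b; ring).
  destruct (uniq c f lam _ _ 0 hd z1 z2 z) as [u1 u2].
  cbv beta in u1, u2. split; lra.
Qed.

Lemma iter_shift (g : R -> R) T r : (forall z, g (z + T) = r * g z) ->
  forall n z, g (z + INR n * T) = r ^ n * g z.
Proof.
  intros h n. induction n as [|n IH]; intro z.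
  - simpl. rewrite Rmult_0_l, Rplus_0_r. ring.
  - rewrite S_INR. replace (z + (INR n + 1) * T) with ((z + INR n * T) + T) by ring.
    rewrite h, IH. simpl. ring.
Qed.

Lemma bnd_big (g : R -> R) T r M : (forall z, Rabs (g z) <= M) ->
  (forall z, g (z + T) = r * g z) -> Rabs r > 1 -> forall z, g z = 0.
Proof.
  intros hM h hr z.
  destruct (Req_dec (g z) 0) as [e|ne]; auto. exfalso.
  assert (hpos : 0 < Rabs (g z)) by (apply Rabs_pos_lt; auto).
  destruct (Pow_x_infinity r hr (M / Rabs (g z) + 1)) as [N HN].
  specialize (HN N (le_n N)).
  pose proof (hM (z + INR N * T)) as hb.
  rewrite (iter_shift g T r h), Rabs_mult in hb.
  assert (Rabs (r ^ N) * Rabs (g z) >= (M / Rabs (g z) + 1) * Rabs (g z)).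
  { apply Rle_ge. apply Rmult_le_compat_r; lra. }
  assert ((M / Rabs (g z) + 1) * Rabs (g z) = M + Rabs (g z)) by (field; lra).
  lra.
Qed.

Lemma bnd_zero (g : R -> R) T r M : (forall z, Rabs (g z) <= M) ->
  (forall z, g (z + T) = r * g z) -> r <> 0 -> Rabs r <> 1 -> forall z, g z = 0.
Proof.
  intros hM h r0 r1.
  destruct (Rlt_le_dec 1 (Rabs r)) as [hr|hr].
  - apply (bnd_big g T r M); auto.
  - assert (hr' : Rabs r < 1) by lra.
    intro z. replace z with (- - z) by ring.
    apply (bnd_big (fun z => g (- z)) T (/ r) M).
    + intro; apply hM.
    + intro x. replace (- x) with (- (x + T) + T) by ring. rewrite h.
      field. auto.
    + rewrite Rabs_inv. assert (0 < Rabs r) by (apply Rabs_pos_lt; auto).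
      apply Rlt_gt. rewrite <- Rinv_1. apply Rinv_lt_contravar; lra.
Qed.

Lemma wronsk c f lam X11 X12 X21 X22 : rfund c f lam X11 X12 X21 X22 ->
  forall z, X11 z * X22 z - X12 z * X21 z = exp (al c lam * z).
Proof.
  intros HF. destruct HF as [h1 [h2 [e11 [e12 [e21 e22]]]]].
  set (a := al c lam).
  set (W := fun z => X11 z * X22 z - X12 z * X21 z).
  assert (hW : forall z, is_derive W z (a * W z)).
  { intro z. destruct (h1 z) as [d11 d21]. destruct (h2 z) as [d12 d22].
    apply dchg with ((X21 z * X22 z + X11 z * (al c lam * X22 z - be c f lam z * X12 z)) -
                     ((X22 z * X21 z + X12 z * (al c lam * X21 z - be c f lam z * X11 z)))).
    - apply (dminus (fun z => X11 z * X22 z) (fun z => X12 z * X21 z)).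
      + apply (dmul X11 X22); auto.
      + apply (dmul X12 X21); auto.
    - unfold W, a. ring. }
  set (D := fun z => W z - exp (a * z)).
  assert (hD : forall z, is_derive D z (a * D z)).
  { intro z. apply dchg with (a * W z - a * exp (a * z)).
    - apply (dminus W (fun z => exp (a * z))). apply hW. apply (dexp a z).
    - unfold D. ring. }
  assert (HE := energy0 (fun z => D z * D z) (fun z => a * D z * D z + D z * (a * D z)) (2 * Rabs a) 0).
  intro z.
  assert (E0 : D z * D z = 0).
  { apply HE.
    - intro x. apply (dmul D D); apply hD.
    - intro x. pose proof (Rle_0_sqr (D x)). unfold Rsqr in *. lra.
    - intro x. replace (a * D x * D x + D x * (a * D x)) with (a * (2 * (D x * D x))) by ring.
      rewrite Rabs_mult. rewrite (Rabs_pos_eq (2 * _)).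
      + lra.
      + pose proof (Rle_0_sqr (D x)). unfold Rsqr in *. lra.
    - unfold D, W. rewrite e11, e12, e21, e22. replace (a * 0) with 0 by ring. rewrite exp_0. ring. }
  assert (D z = 0) by (apply Rsqr_0_uniq; exact E0).
  unfold D, W in H. lra.
Qed.

Lemma rec_rel c f lam T X11 X12 X21 X22 y y1 :
  rfund c f lam X11 X12 X21 X22 -> (forall z, be c f lam (z + T) = be c f lam z) ->
  rsol c f lam y y1 ->
  forall z, y (z + T + T) = (X11 T + X22 T) * y (z + T) - exp (al c lam * T) * y z.
Proof.
  intros HF hb hy z.
  assert (hW := wronsk c f lam X11 X12 X21 X22 HF T).
  assert (hy1 := rsol_shift c f lam y y1 T hb hy).
  assert (hy2 := rsol_shift c f lam _ _ T hb hy1).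
  destruct (repr c f lam X11 X12 X21 X22 _ _ HF hy2 z) as [Hzz _].
  destruct (repr c f lam X11 X12 X21 X22 _ _ HF hy1 z) as [Hz1 _].
  destruct (repr c f lam X11 X12 X21 X22 _ _ HF hy1 T) as [HTT1 HTT2].
  destruct (repr c f lam X11 X12 X21 X22 _ _ HF hy z) as [Hz0 _].
  destruct (repr c f lam X11 X12 X21 X22 _ _ HF hy T) as [HT1 HT2].
  cbv beta in Hzz, Hz1, HTT1, HTT2.
  rewrite !Rplus_0_l in Hzz, Hz1, HTT1, HTT2.
  rewrite Hzz, HTT1, HTT2, Hz1, Hz0, HT1, HT2, <- hW. ring.
Qed.

Lemma abs_prod_le a b M : Rabs a <= M -> Rabs b <= M -> Rabs (a * b) <= M * M.
Proof. intros. rewrite Rabs_mult. apply Rmult_le_compat; auto; apply Rabs_pos. Qed.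

Lemma abs_one r : Rabs r = 1 -> r = 1 \/ r = -1.
Proof. unfold Rabs; destruct (Rcase_abs r); intros; [right|left]; lra. Qed.

Lemma main_real c f lam T X11 X12 X21 X22 y y1 M :
  rfund c f lam X11 X12 X21 X22 -> (forall z, be c f lam (z + T) = be c f lam z) ->
  rsol c f lam y y1 -> (forall z, Rabs (y z) <= M) ->
  exp (al c lam * T) <> 1 ->
  1 - (X11 T + X22 T) + exp (al c lam * T) <> 0 ->
  1 + (X11 T + X22 T) + exp (al c lam * T) <> 0 -> forall z, y z = 0.
Proof.
  intros HF hb hy hM hD1 hn1 hn2.
  assert (hrec := rec_rel c f lam T X11 X12 X21 X22 y y1 HF hb hy).
  set (t := X11 T + X22 T) in *. set (D := exp (al c lam * T)) in *.
  assert (Dpos : 0 < D) by apply exp_pos.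
  assert (M0 : 0 <= M) by (apply Rle_trans with (Rabs (y 0)); [apply Rabs_pos|apply hM]).
  destruct (Rle_dec 0 (t * t - 4 * D)) as [hd|hd].
  - set (s := sqrt (t * t - 4 * D)).
    assert (hs : s * s = t * t - 4 * D) by (apply sqrt_sqrt; exact hd).
    set (r1 := (t + s) / 2). set (r2 := (t - s) / 2).
    assert (ht : t = r1 + r2) by (unfold r1, r2; field).
    assert (hD : D = r1 * r2).
    { unfold r1, r2. replace ((t + s) / 2 * ((t - s) / 2)) with ((t * t - s * s) / 4) by field.
      rewrite hs. field. }
    assert (bad : forall r, (r = r1 \/ r = r2) -> r <> 0 /\ Rabs r <> 1).
    { intros r hr. split.
      - intro e. destruct hr; subst r; rewrite e in hD; lra.
      - intro e. assert (hq : (r - r1) * (r - r2) = 0) by (destruct hr; subst r; ring).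
        replace ((r - r1) * (r - r2)) with (r * r - t * r + D) in hq by (rewrite ht, hD; ring).
        destruct (abs_one r e); subst r; [apply hn1|apply hn2]; lra. }
    destruct (bad r1 (or_introl eq_refl)) as [a1 b1].
    destruct (bad r2 (or_intror eq_refl)) as [a2 b2].
    assert (hg : forall z, y (z + T) - r1 * y z = 0).
    { apply (bnd_zero (fun z => y (z + T) - r1 * y z) T r2 (M + Rabs r1 * M)); auto.
      - intro z. eapply Rle_trans. apply Rabs_triang. rewrite Rabs_Ropp, Rabs_mult.
        apply Rplus_le_compat. apply hM. apply Rmult_le_compat_l. apply Rabs_pos. apply hM.
      - intro z. cbv beta. rewrite hrec. rewrite ht, hD. ring. }
    apply (bnd_zero y T r1 M); auto.
    intro z. specialize (hg z). lra.
  - set (Q := fun z => y (z + T) * y (z + T) - t * (y (z + T) * y z) + D * (y z * y z)).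
    assert (hQ : forall z, Q z = 0).
    { apply (bnd_zero Q T D (M * M + Rabs t * (M * M) + D * (M * M))).
      - intro z. unfold Q. eapply Rle_trans. apply Rabs_triang.
        eapply Rle_trans. apply Rplus_le_compat_r. apply Rabs_triang.
        rewrite Rabs_Ropp, (Rabs_mult t), (Rabs_mult D), (Rabs_pos_eq D) by lra.
        apply Rplus_le_compat. apply Rplus_le_compat.
        + apply abs_prod_le; apply hM.
        + apply Rmult_le_compat_l. apply Rabs_pos. apply abs_prod_le; apply hM.
        + apply Rmult_le_compat_l. lra. apply abs_prod_le; apply hM.
      - intro z. unfold Q. rewrite hrec. ring.
      - lra.
      - rewrite Rabs_pos_eq by lra. exact hD1. }
    intro z. specialize (hQ z). unfold Q in hQ.
    set (Y := y (z + T)) in *. set (u := y z) in *.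
    assert (h4 : (2 * Y - t * u) * (2 * Y - t * u) + (4 * D - t * t) * (u * u) = 0)
      by (replace 0 with (4 * 0) by ring; rewrite <- hQ; ring).
    pose proof (Rle_0_sqr (2 * Y - t * u)). pose proof (Rle_0_sqr u). unfold Rsqr in *.
    assert (hp : 0 < 4 * D - t * t) by lra.
    assert (hz : (4 * D - t * t) * (u * u) = 0).
    { assert (0 <= (4 * D - t * t) * (u * u)) by (apply Rmult_le_pos; lra). lra. }
    apply Rmult_integral in hz. destruct hz as [hz|hz]; [lra|].
    apply Rmult_integral in hz. destruct hz; auto.
Qed.

Lemma c_eq (z : C) : snd z = 0 -> z = RtoC (fst z).
Proof. destruct z as [a b]. simpl. intros ->. reflexivity. Qed.

Theorem lemma3p5 (c : R) (f : R -> R) (T : R) (lam : R)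
  (hc0 : c <> 0) (hc1 : c ^ 2 <> 1)
  (hf : periodic_traveling_wave c f T)
  (hlam0 : lam <> 0)
  (hsig : in_sigmaP c f (RtoC lam))
  (F11 F12 F21 F22 : R -> C)
  (hF : fundamental_matrix c f (RtoC lam) F11 F12 F21 F22) :
  exists rho : C,
    is_eigenvalue2 (F11 T) (F12 T) (F21 T) (F22 T) rho /\ Cmult rho rho = RtoC 1.
Proof.
  destruct hf as [_ [hT [hper _]]].
  assert (hb := be_per c f lam T hper).
  destruct hF as [hd [i11 [i12 [i21 i22]]]].
  assert (s1 : forall z, is_derive F11 z (F21 z) /\ is_derive F21 z (P_rhs c f (RtoC lam) z (F11 z) (F21 z)))
    by (intro z; destruct (hd z) as [? [? [? ?]]]; auto).
  assert (s2 : forall z, is_derive F12 z (F22 z) /\ is_derive F22 z (P_rhs c f (RtoC lam) z (F12 z) (F22 z)))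
    by (intro z; destruct (hd z) as [? [? [? ?]]]; auto).
  set (X11 := fun z => fst (F11 z)). set (X12 := fun z => fst (F12 z)).
  set (X21 := fun z => fst (F21 z)). set (X22 := fun z => fst (F22 z)).
  assert (HF : rfund c f lam X11 X12 X21 X22).
  { unfold rfund, X11, X12, X21, X22.
    rewrite i11, i12, i21, i22. simpl.
    split; [apply (csol_fst c f lam F11 F21 s1)|].
    split; [apply (csol_fst c f lam F12 F22 s2)|].
    repeat split; reflexivity. }
  assert (im1 := uniq c f lam _ _ 0 (csol_snd c f lam F11 F21 s1)).
  assert (im2 := uniq c f lam _ _ 0 (csol_snd c f lam F12 F22 s2)).
  cbv beta in im1, im2. rewrite i11, i21 in im1. rewrite i12, i22 in im2. simpl in im1, im2.
  specialize (im1 eq_refl eq_refl T). specialize (im2 eq_refl eq_refl T).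
  destruct im1 as [j11 j21]. destruct im2 as [j12 j22].
  rewrite (c_eq _ j11), (c_eq _ j21), (c_eq _ j12), (c_eq _ j22).
  fold (X11 T) (X12 T) (X21 T) (X22 T).
  assert (hW := wronsk c f lam X11 X12 X21 X22 HF T).
  set (D := exp (al c lam * T)) in *. set (t := X11 T + X22 T).
  assert (eig : forall r, r * r = 1 -> 1 - r * t + D = 0 ->
     exists rho : C, is_eigenvalue2 (RtoC (X11 T)) (RtoC (X12 T)) (RtoC (X21 T)) (RtoC (X22 T)) rho /\
       Cmult rho rho = RtoC 1).
  { intros r hr he. exists (RtoC r). unfold is_eigenvalue2, Cminus, Cmult, Copp, Cplus, RtoC. simpl.
    split; apply injective_projections; simpl; unfold t in he; nra. }
  destruct (Req_dec (1 - t + D) 0) as [e1|e1].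
  { apply (eig 1). ring. lra. }
  destruct (Req_dec (1 + t + D) 0) as [e2|e2].
  { apply (eig (-1)). ring. lra. }
  exfalso.
  assert (hD1 : D <> 1).
  { intro e. unfold D in e. assert (al c lam * T = 0).
    { rewrite <- (ln_exp (al c lam * T)), e. apply ln_1. }
    unfold al, gam in H. assert (/ (c ^ 2 - 1) <> 0) by (apply Rinv_neq_0_compat; lra).
    repeat (apply Rmult_integral in H; destruct H as [H|H]); lra. }
  destruct hsig as [p [[p1 [p2 hp]] [[z0 hz0] [M hM]]]].
  assert (sp : forall z, is_derive p z (p1 z) /\ is_derive p1 z (P_rhs c f (RtoC lam) z (p z) (p1 z))).
  { intro z. destruct (hp z) as [? [? e]]. rewrite <- e. auto. }
  assert (b1 : forall z, Rabs (fst (p z)) <= M).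
  { intro z. eapply Rle_trans; [|apply (hM z)]. eapply Rle_trans; [|apply Rmax_Cmod]. apply Rmax_l. }
  assert (b2 : forall z, Rabs (snd (p z)) <= M).
  { intro z. eapply Rle_trans; [|apply (hM z)]. eapply Rle_trans; [|apply Rmax_Cmod]. apply Rmax_r. }
  assert (z1 := main_real c f lam T X11 X12 X21 X22 _ _ M HF hb (csol_fst c f lam p p1 sp) b1 hD1 e1 e2 z0).
  assert (z2 := main_real c f lam T X11 X12 X21 X22 _ _ M HF hb (csol_snd c f lam p p1 sp) b2 hD1 e1 e2 z0).
  apply hz0. cbv beta in z1, z2. destruct (p z0) as [a b]. simpl in z1, z2. subst. reflexivity.
Qed.
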